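(* Let $S$, $\Phi$, $\kappa$ and the unit vector field $v$ be as in the context. Then for each $l\ge1$ there is a vector field of unit vectors $v^l:S\to\mathbb R^2$ such that for $\kappa$-a.e. $x\in S$, writing $x=\Phi(w)$ with $w=(w_0w_1\dots)\in\Sigma$, $$\Big\|\frac{D\psi_{w_0\dots w_{l-1}}}{\|D\psi_{w_0\dots w_{l-1}}\|_{HS}}-v^l(x)\otimes v(x)\Big\|_{HS}\longrightarrow 0\quad\text{as }l\to\infty.$$ (The convergence is not asserted to be uniform in $x$.)
   Context: Let $T_1=\begin{pmatrix}3/5&0\\0&1/5\end{pmatrix}$, $T_2=\begin{pmatrix}3/10&\sqrt3/10\\ \sqrt3/10&1/2\end{pmatrix}$, $T_3=\begin{pmatrix}3/10&-\sqrt3/10\\ -\sqrt3/10&1/2\end{pmatrix}$, $\bar A=(0,0)$, $\bar B=(1,1/\sqrt3)$, $\bar C=(1,-1/\sqrt3)$, and $\psi_1(x)=\bar A+T_1(x-\bar A)$, $\psi_2(x)=\bar B+T_2(x-\bar B)$, $\psi_3(x)=\bar C+T_3(x-\bar C)$. The harmonic Sierpinski gasket $S$ is the unique nonempty compact set with $S=\bigcup_i\psi_i(S)$. Let $\Sigma=\{1,2,3\}^{\mathbb N}$; for $w\in\Sigma$ write $\psi_{w_0\dots w_l}=\psi_{w_0}\circ\cdots\circ\psi_{w_l}$ (affine, with constant derivative $D\psi_{w_0\dots w_l}$). The coding map $\Phi:\Sigma\to S$ sends $w$ to the unique point of $\bigcap_l\psi_{w_0\dots w_l}(\triangle)$, $\triangle$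 the closed triangle $\bar A\bar B\bar C$; $\Phi$ is continuous, surjective and injective outside a countable set. For a $2\times2$ matrix $A$, $\|A\|_{HS}^2=\mathrm{tr}({}^tAA)$. For vectors $u,w\in\mathbb R^2$, $u\otimes w$ is the linear map $a\mapsto (a,u)\,w$. For a unit vector $v$, $P_v$ is the orthogonal projection onto $\mathbb R v$. Kusuoka's measure: let $\mathcal L$ act on continuous symmetric-matrix fields by $(\mathcal LA)(x)=\sum_i{}^tD\psi_iA_{\psi_i(x)}D\psi_i$; it has a simple positive eigenvalue $\beta$ (eigenspace spanned by $Id$), and there is a unique semipositive-definite symmetric-matrix-valued Borel measure $\tau$ on $S$ with $\mathrm{tr}\,\tau(S)=1$ and $\mathcal L^*\tau=\beta\tau$; $\tau(S)$ is a positive multiple of $Id$. Kusuoka's measure is the probability measure $\kappa(E)=\mathrm{tr}\,\tau(E)$; it is non-atomic. It is known that there is a Borel field of unit vectors $v:S\to\mathbb R^2$ with $\tau=P_{v(x)}\kappa$ and such that for $\kappa$-a.e. $x=\Phi(w)$, $P_{v(x)}=\lim_{l\to\infty}D\psi_{w_0\dots w_{l-1}}\,{}^tD\psi_{w_0\dots w_{l-1}}/\|D\psi_{w_0\dots w_{l-1}}\|_{HS}^2$. *)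

(* Defs.v *)
From HB Require Import structures.
From mathcomp Require Import all_boot all_order all_algebra.
From mathcomp Require Import all_classical all_reals all_analysis.
Set Implicit Arguments. Unset Strict Implicit. Unset Printing Implicit Defensive.
Import Order.TTheory GRing.Theory Num.Theory.
Import numFieldNormedType.Exports.
Local Open Scope classical_set_scope.
Local Open Scope ring_scope.

Section HarmonicGasket.
Variable R : realType.

(* Points of the plane are pairs (R * R), equipped with the product
   (= Borel) sigma-algebra and the product topology; linear algebra is
   done on column vectors 'cV[R]_2. Digits {1,2,3} are coded by 'I_3
   (digit 0,1,2 <-> 1,2,3). *)
Definition cv (p : R * R) : 'cV[R]_2 := \col_i (if i == 0 then p.1 else p.2).
Definition pt (u : 'cV[R]_2) : R * R := (u 0 0, u 1 0).

Definition s3 : R := Num.sqrt 3.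

Definition T1 : 'M[R]_2 := \matrix_(i, j) (if i == j then (if i == 0 then 3/5 else 1/5) else 0).
Definition T2 : 'M[R]_2 := \matrix_(i, j)
  (if i == j then (if i == 0 then 3/10 else 1/2) else s3 / 10).
Definition T3 : 'M[R]_2 := \matrix_(i, j)
  (if i == j then (if i == 0 then 3/10 else 1/2) else - (s3 / 10)).

Definition T (i : 'I_3) : 'M[R]_2 :=
  if val i == 0%N then T1 else if val i == 1%N then T2 else T3.

Definition fixpt (i : 'I_3) : 'cV[R]_2 :=
  if val i == 0%N then 0 else
  if val i == 1%N then \col_k (if k == 0 then 1 else 1 / s3)
  else \col_k (if k == 0 then 1 else - (1 / s3)).

Definition psi (i : 'I_3) (x : R * R) : R * R :=
  pt (fixpt i + T i *m (cv x - fixpt i)).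

Fixpoint psi_seq (s : seq 'I_3) (x : R * R) : R * R :=
  if s is i :: s' then psi i (psi_seq s' x) else x.
Definition psiw (w : nat -> 'I_3) (l : nat) : R * R -> R * R :=
  psi_seq [seq w k | k <- iota 0 l].

Definition Dpsiw (w : nat -> 'I_3) (l : nat) : 'M[R]_2 :=
  foldr (fun i M => T i *m M) 1%:M [seq w k | k <- iota 0 l].

Definition triangle : set (R * R) :=
  [set x | exists a b c : R, [/\ 0 <= a, 0 <= b, 0 <= c, a + b + c = 1 &
     cv x = a *: fixpt 0 + b *: fixpt 1 + c *: fixpt 2]].

(* x = Phi(w) : x is the (unique) point of  \bigcap_l psi_{w_0..w_l}(triangle) *)
Definition coding (w : nat -> 'I_3) (x : R * R) : Prop :=
  forall l : nat, exists2 y, triangle y & x = psiw w l.+1 y.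

Definition is_attractor (S : set (R * R)) : Prop :=
  [/\ S !=set0, compact S & S = \bigcup_(i in [set: 'I_3]) (psi i @` S)].

Definition hs {m n} (A : 'M[R]_(m, n)) : R := Num.sqrt (\tr (A^T *m A)).

(* u (x) w : a |-> (a,u) w, i.e. the matrix  w u^T *)
Definition vtensor (u w : 'cV[R]_2) : 'M[R]_2 := w *m u^T.

Definition mxproj (v : 'cV[R]_2) : 'M[R]_2 := v *m v^T.

Definition unit_vec (v : 'cV[R]_2) : Prop := hs v = 1.

(* beta: the eigenvalue of L whose eigenspace is spanned by Id,
   i.e.  L Id = sum_i tD psi_i D psi_i = beta Id *)
Definition L_eigenvalue_Id (beta : R) : Prop :=
  \sum_(i < 3) (T i)^T *m T i = beta%:M.

Definition psd_mx_measure (S : set (R * R)) (tau : set (R * R) -> 'M[R]_2) : Prop :=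
  [/\ tau set0 = 0,
      (forall F : nat -> set (R * R), (forall n, measurable (F n)) ->
         trivIset setT F -> forall i j,
         (fun n : nat => \sum_(k < n) tau (F k) i j) @ \oo --> tau (\bigcup_n F n) i j),
      (forall E, measurable E -> (tau E)^T = tau E /\
         forall u : 'cV[R]_2, 0 <= (u^T *m tau E *m u) 0 0)
    & tau (~` S) = 0].

(* L^* tau = beta tau, where by duality with
   (L A)(x) = sum_i tD psi_i A_{psi_i x} D psi_i  one has
   (L^* tau)(E) = sum_i D psi_i tau(psi_i^{-1} E) tD psi_i *)
Definition kusuoka_tau (S : set (R * R)) (beta : R) (tau : set (R * R) -> 'M[R]_2) : Prop :=
  [/\ psd_mx_measure S tau,
      (forall E, measurable E ->
         \sum_(i < 3) T i *m tau (psi i @^-1` E) *m (T i)^T = beta *: tau E)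
    & \tr (tau S) = 1].

Definition kappa (tau : set (R * R) -> 'M[R]_2) (E : set (R * R)) : R := \tr (tau E).

Definition kappa_ae (tau : set (R * R) -> 'M[R]_2) (P : R * R -> Prop) : Prop :=
  exists N : set (R * R), [/\ measurable N, kappa tau N = 0 & forall x, ~ N x -> P x].

End HarmonicGasket.
Arguments Dpsiw {R}.
Arguments psiw {R}.
Arguments T {R}.
Arguments fixpt {R}.
Arguments s3 {R}.

(* Main.v *)
Require Import Defs.
From HB Require Import structures.
From mathcomp Require Import all_boot all_order all_algebra.
From mathcomp Require Import all_classical all_reals all_analysis.
From mathcomp Require Import ring lra.
Import Order.TTheory GRing.Theory Num.Theory.
Import numFieldNormedType.Exports.
Set Implicit Arguments. Unset Strict Implicit. Unset Printing Implicit Defensive.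
Local Open Scope classical_set_scope.
Local Open Scope ring_scope.

Section Aux.
Variable R : realType.

Lemma s3_gt0 : 0 < (s3 : R). Proof. by rewrite /s3 sqrtr_gt0. Qed.
Lemma s3_sq : (s3 : R) * s3 = 3. Proof. by rewrite /s3 -expr2 sqr_sqrtr. Qed.
Lemma ptK (x : R * R) : pt (cv x) = x.
Proof. by case: x => a b; rewrite /pt /cv !mxE. Qed.
Lemma cvK (u : 'cV[R]_2) : cv (pt u) = u.
Proof. apply/matrixP => i j; rewrite !mxE /= (ord1 j).
case: i => [[|[|//]]] Hi /=; congr (u _ _); exact: val_inj. Qed.
Ltac psiT := rewrite /psi /pt !mxE /= !big_ord_recr !big_ord0 /= !mxE /=; congr pair; ring.
Lemma psi0E (y : R * R) : psi 0 y = (3/5 * y.1, 1/5 * y.2).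
Proof. psiT. Qed.
Lemma psi1E (y : R * R) : psi 1 y = (1 + 3/10*(y.1 - 1) + s3/10*(y.2 - 1/s3), 1/s3 + s3/10*(y.1 - 1) + 1/2*(y.2 - 1/s3)).
Proof. psiT. Qed.
Lemma psi2E (y : R * R) : psi 2 y = (1 + 3/10*(y.1 - 1) - s3/10*(y.2 + 1/s3), -(1/s3) - s3/10*(y.1-1) + 1/2*(y.2 + 1/s3)).
Proof. psiT. Qed.
Lemma s3_neq0 : (s3 : R) != 0. Proof. by rewrite gt_eqF ?s3_gt0. Qed.
Lemma psi0x (y : R * R) : (psi 0 y).1 = 3/5*y.1. Proof. by rewrite psi0E. Qed.
Lemma psi0y (y : R * R) : s3*(psi 0 y).2 = 1/5*(s3*y.2). Proof. rewrite psi0E /=; ring. Qed.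
Lemma psi1x (y : R * R) : (psi 1 y).1 = 1 + 3/10*(y.1-1) + 1/10*(s3*y.2 - 1).
Proof. rewrite psi1E /=; have := s3_neq0; move=> h; field; exact: h. Qed.
Lemma psi1y (y : R * R) : s3*(psi 1 y).2 = 1 + 3/10*(y.1-1) + 1/2*(s3*y.2 - 1).
Proof. rewrite psi1E /=; have h := s3_neq0.
rewrite [3 in RHS](_ : 3 = s3 * s3); last by rewrite s3_sq.
field; exact: h. Qed.
Lemma psi2x (y : R * R) : (psi 2 y).1 = 1 + 3/10*(y.1-1) - 1/10*(s3*y.2 + 1).
Proof. rewrite psi2E /=; have := s3_neq0; move=> h; field; exact: h. Qed.
Lemma psi2y (y : R * R) : s3*(psi 2 y).2 = -1 - 3/10*(y.1-1) + 1/2*(s3*y.2 + 1).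
Proof. rewrite psi2E /=; have h := s3_neq0.
rewrite [3 in RHS](_ : 3 = s3 * s3); last by rewrite s3_sq.
field; exact: h. Qed.

Lemma tri_w y : triangle y -> exists a b c : R, [/\ 0<=a, 0<=b, 0<=c, a+b+c = 1 &
  y.1 = b + c /\ s3 * y.2 = b - c].
Proof.
case=> a [b [c [a0 b0 c0 s1 E]]]; exists a, b, c; split => //; split.
  have := congr1 (fun M : 'cV[R]_2 => M 0 0) E; rewrite !mxE /= => ->; ring.
have := congr1 (fun M : 'cV[R]_2 => M 1 0) E; rewrite !mxE /= => ->.
have h := s3_neq0; field; exact: h.
Qed.

Lemma I3cases (a : 'I_3) : a = 0 \/ a = 1 \/ a = 2.
Proof. case: a => [[|[|[|//]]] Ha]; [left|right;left|right;right]; exact: val_inj. Qed.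

Lemma pt_f0 : pt (fixpt 0) = (0, 0) :> R * R. Proof. by rewrite /pt /fixpt /= !mxE. Qed.
Lemma pt_f1 : pt (fixpt 1) = (1, 1/s3) :> R * R. Proof. by rewrite /pt /fixpt /= !mxE. Qed.
Lemma pt_f2 : pt (fixpt 2) = (1, -(1/s3)) :> R * R. Proof. by rewrite /pt /fixpt /= !mxE. Qed.

Lemma junction (a b : 'I_3) (y y' : R * R) : a != b -> triangle y -> triangle y' ->
  psi a y = psi b y' -> exists j, y = pt (fixpt j) \/ y' = pt (fixpt j).
Proof.
move=> ab /tri_w [al [be [ga [? ? ? ? [e1 e2]]]]] /tri_w [al' [be' [ga' [? ? ? ? [e1' e2']]]]] E.
have Ex : (psi a y).1 = (psi b y').1 by rewrite E.
have Ey : s3 * (psi a y).2 = s3 * (psi b y').2 by rewrite E.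
move: Ex Ey.
have hs := s3_neq0.
have v0 : forall z : R*R, z.1 = 0 -> s3 * z.2 = 0 -> z = pt (fixpt 0).
  move=> [z1 z2] /= -> h; rewrite pt_f0; congr pair.
  by move/eqP: h; rewrite mulf_eq0 (negbTE hs) => /eqP.
have v1 : forall z : R*R, z.1 = 1 -> s3 * z.2 = 1 -> z = pt (fixpt 1).
  move=> [z1 z2] /= -> h; rewrite pt_f1; congr pair.
  by rewrite -h; field.
have v2 : forall z : R*R, z.1 = 1 -> s3 * z.2 = -1 -> z = pt (fixpt 2).
  move=> [z1 z2] /= -> h; rewrite pt_f2; congr pair.
  by rewrite -[1 in RHS]opprK -h; field.
move: ab; case: (I3cases a) => [->|[->|->]]; case: (I3cases b) => [->|[->|->]];
  rewrite ?eqxx // => _;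
rewrite ?psi0x ?psi0y ?psi1x ?psi1y ?psi2x ?psi2y e1 e2 e1' e2' => Ex Ey.
- exists 0; right; apply: v0; lra.
- exists 0; right; apply: v0; lra.
- exists 0; left; apply: v0; lra.
- exists 2; left; apply: v2; lra.
- exists 0; left; apply: v0; lra.
- exists 1; left; apply: v1; lra.
Qed.

Lemma psi_inj (i : 'I_3) : injective (@psi R i).
Proof.
move=> [a b] [c d] E.
have Ex : (psi i (a, b)).1 = (psi i (c, d)).1 by rewrite E.
have Ey : s3 * (psi i (a, b)).2 = s3 * (psi i (c, d)).2 by rewrite E.
move: Ex Ey; case: (I3cases i) => [->|[->|->]];
rewrite ?psi0x ?psi0y ?psi1x ?psi1y ?psi2x ?psi2y /= => Ex Ey;
(have h1 : a = c by lra); (have h2 : s3 * b = s3 * d by lra);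
congr pair => //; exact: (mulfI (@s3_neq0)) h2.
Qed.

Lemma psi_seq_inj (s : seq 'I_3) : injective (@psi_seq R s).
Proof. elim: s => [|i s IH] x y //= /psi_inj; exact: IH. Qed.

Lemma psi_seq_cat (s1 s2 : seq 'I_3) (y : R * R) :
  psi_seq (s1 ++ s2) y = psi_seq s1 (psi_seq s2 y).
Proof. by elim: s1 => [|i s IH] //=; rewrite IH. Qed.

Definition Jset : set (R * R) :=
  [set x | exists (s : seq 'I_3) (c j : 'I_3), x = psi_seq s (psi c (pt (fixpt j)))].

Lemma psiwS (w : nat -> 'I_3) k (y : R * R) :
  psiw w k.+1 y = psi_seq [seq w i | i <- iota 0 k] (psi (w k) y).
Proof. rewrite /psiw; have -> : iota 0 k.+1 = iota 0 k ++ [:: k] by rewrite -addn1 iotaD.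
by rewrite map_cat psi_seq_cat. Qed.

Lemma two_codings (w w' : nat -> 'I_3) (x : R * R) :
  coding w x -> coding w' x -> (exists k, w k != w' k) -> Jset x.
Proof.
move=> cw cw' ex.
have ex' : exists k, (fun k => w k != w' k) k by [].
case: (ex_minnP ex') => k wk kmin.
have pre : [seq w i | i <- iota 0 k] = [seq w' i | i <- iota 0 k].
  apply/eq_in_map => i; rewrite mem_iota add0n => /andP [_ ik].
  apply/eqP; apply: contraLR ik; rewrite -leqNgt; exact: kmin.
case: (cw k) => y ty ey; case: (cw' k) => y' ty' ey'.
move: ey'; rewrite psiwS -pre ey psiwS => /psi_seq_inj E.
case: (junction wk ty ty' E) => j [ej|ej].
  by exists [seq w i | i <- iota 0 k], (w k), j; rewrite ej.
by exists [seq w i | i <- iota 0 k], (w' k), j; rewrite E ej.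
Qed.

Lemma sum2 (F : 'I_2 -> R) : \sum_i F i = F 0 + F 1.
Proof. rewrite !big_ord_recl big_ord0 addr0; congr (_ + F _); exact: val_inj. Qed.
Lemma sum1 (F : 'I_1 -> R) : \sum_i F i = F 0.
Proof. by rewrite big_ord1. Qed.
Lemma hs_mx2 (A : 'M[R]_2) : hs A = Num.sqrt (A 0 0 ^+2 + A 0 1 ^+2 + A 1 0 ^+2 + A 1 1 ^+2).
Proof.
rewrite /hs /mxtrace sum2 !mxE !sum2 !mxE.
congr Num.sqrt; ring.
Qed.
Lemma hs_cv2 (z : 'cV[R]_2) : hs z = Num.sqrt (z 0 0 ^+2 + z 1 0 ^+2).
Proof.
rewrite /hs /mxtrace sum1 !mxE !sum2 !mxE.
congr Num.sqrt; ring.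
Qed.
Lemma cs4 (x1 x2 x3 x4 y1 y2 y3 y4 : R) :
  (x1*y1 + x2*y2 + x3*y3 + x4*y4)^+2 <= (x1^+2+x2^+2+x3^+2+x4^+2) * (y1^+2+y2^+2+y3^+2+y4^+2).
Proof.
have H : (x1^+2+x2^+2+x3^+2+x4^+2) * (y1^+2+y2^+2+y3^+2+y4^+2) - (x1*y1 + x2*y2 + x3*y3 + x4*y4)^+2
  = (x1*y2-x2*y1)^+2 + (x1*y3-x3*y1)^+2 + (x1*y4-x4*y1)^+2 + (x2*y3-x3*y2)^+2 + (x2*y4-x4*y2)^+2 + (x3*y4-x4*y3)^+2 by ring.
rewrite -subr_ge0 H; by rewrite !addr_ge0 ?sqr_ge0.
Qed.

Lemma core_real (a b c d p q u0 u1 e : R) :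
  a^+2+b^+2+c^+2+d^+2 = 1 -> p^+2+q^+2 = 1 -> u0^+2+u1^+2 = 1 ->
  u0*(a* p+c* q) + u1*(b* p+d* q) = Num.sqrt ((a* p+c* q)^+2 + (b* p+d* q)^+2) ->
  0 <= e ->
  e^+2 = (a^+2+b^+2 - p^+2)^+2 + (a*c+b*d - p* q)^+2 + (c*a+d*b - q* p)^+2 + (c^+2+d^+2-q^+2)^+2 ->
  (a - p*u0)^+2 + (b - p*u1)^+2 + (c - q*u0)^+2 + (d - q*u1)^+2 <= 2 * e.
Proof.
move=> hM hv hu hz he he2.
set B := (a^+2+b^+2 - p^+2) * p^+2 + (a*c+b*d - p* q) * (p* q) + (c*a+d*b - q* p) * (q* p) + (c^+2+d^+2-q^+2) * q^+2.
have f2 : (a - p*u0)^+2 + (b - p*u1)^+2 + (c - q*u0)^+2 + (d - q*u1)^+2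
   = (a^+2+b^+2+c^+2+d^+2) - 2 * (u0*(a* p+c* q) + u1*(b* p+d* q)) + (p^+2+q^+2)*(u0^+2+u1^+2) by ring.
have z2 : (a* p+c* q)^+2 + (b* p+d* q)^+2 = B + (p^+2+q^+2)^+2 by rewrite /B; ring.
rewrite f2 hM hv hu hz z2 hv.
have cs := cs4 (a^+2+b^+2 - p^+2) (a*c+b*d - p* q) (c*a+d*b - q* p) (c^+2+d^+2-q^+2) (p^+2) (p* q) (q* p) (q^+2).
have hB2 : B^+2 <= e^+2.
  rewrite he2 /B; apply: (le_trans cs).
  have -> : (p ^+ 2) ^+ 2 + (p * q) ^+ 2 + (q * p) ^+ 2 + (q ^+ 2) ^+ 2 = (p^+2+q^+2)^+2 by ring.
  by rewrite hv expr1n mulr1.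
have hB : `|B| <= e.
  by rewrite -(ger0_norm he); rewrite -ler_sqr ?normr_ge0 // !real_normK ?num_real.
have h1B : 0 <= B + 1 ^+ 2.
  by move: z2; rewrite hv => <-; rewrite addr_ge0 ?sqr_ge0.
set s := Num.sqrt (B + 1 ^+ 2).
have s0 : 0 <= s by apply: sqrtr_ge0.
have ss : s ^+ 2 = B + 1 by rewrite /s sqr_sqrtr // expr1n.
have : 1 - s <= `|B|.
  case: (lerP 1 s) => hs1; first by apply: le_trans (normr_ge0 _); lra.
  have hB0 : B <= 0 by nra.
  rewrite ler0_norm //; nra.
lra.
Qed.

Lemma sqr_hs {m n} (A : 'M[R]_(m, n)) : hs A ^+ 2 = \tr (A^T *m A).
Proof.
rewrite /hs sqr_sqrtr // /mxtrace; apply: sumr_ge0 => i _; rewrite !mxE.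
by apply: sumr_ge0 => j _; rewrite !mxE -expr2 sqr_ge0.
Qed.
Lemma hs_ge0 {m n} (A : 'M[R]_(m, n)) : 0 <= hs A.
Proof. exact: sqrtr_ge0. Qed.

Definition e0 : 'cV[R]_2 := \col_i (if i == 0 then 1 else 0).
Definition nrm (z : 'cV[R]_2) := if hs z == 0 then e0 else (hs z)^-1 *: z.

Lemma nrm_prop (z : 'cV[R]_2) : (nrm z 0 0)^+2 + (nrm z 1 0)^+2 = 1 /\
  nrm z 0 0 * z 0 0 + nrm z 1 0 * z 1 0 = hs z.
Proof.
have hz2 : hs z ^+ 2 = z 0 0 ^+2 + z 1 0 ^+2.
  by rewrite hs_cv2 sqr_sqrtr // addr_ge0 ?sqr_ge0.
rewrite /nrm; case: eqP => h.
  have z0 : z 0 0 = 0 /\ z 1 0 = 0.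
    move: hz2; rewrite h expr0n /= => /esym H.
    have a0 : z 0 0 ^+ 2 = 0 by have := sqr_ge0 (z 0 0); have := sqr_ge0 (z 1 0); lra.
    have b0 : z 1 0 ^+ 2 = 0 by have := sqr_ge0 (z 0 0); have := sqr_ge0 (z 1 0); lra.
    by move/eqP: a0; move/eqP: b0; rewrite !sqrf_eq0 => /eqP -> /eqP ->.
  case: z0 => -> ->; rewrite h /e0 !mxE /=; split; ring.
rewrite !mxE; split.
  rewrite !exprMn -mulrDr -hz2 exprVn mulVf //; by rewrite expf_neq0 //; apply/eqP.
rewrite -!mulrA -mulrDr -!expr2 -hz2; field; exact/eqP.
Qed.

Lemma key (M : 'M[R]_2) (v : 'cV[R]_2) : hs M = 1 -> hs v = 1 ->
  hs (M - vtensor (nrm (M^T *m v)) v) ^+ 2 <= 2 * hs (M *m M^T - mxproj v).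
Proof.
move=> hM hv.
set u := nrm (M^T *m v); set E := M *m M^T - mxproj v.
have [hu1 hu2] := nrm_prop (M^T *m v).
have S1 : M 0 0 ^+2 + M 0 1 ^+2 + M 1 0 ^+2 + M 1 1 ^+2 = 1.
  by move: hM; rewrite hs_mx2 => /(congr1 (fun x => x ^+ 2)); rewrite sqr_sqrtr ?expr1n // !addr_ge0 ?sqr_ge0.
have V1 : v 0 0 ^+2 + v 1 0 ^+2 = 1.
  by move: hv; rewrite hs_cv2 => /(congr1 (fun x => x ^+ 2)); rewrite sqr_sqrtr ?expr1n // !addr_ge0 ?sqr_ge0.
have hz : nrm (M^T *m v) 0 0 * (M 0 0 * v 0 0 + M 1 0 * v 1 0) + nrm (M^T *m v) 1 0 * (M 0 1 * v 0 0 + M 1 1 * v 1 0)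
   = Num.sqrt ((M 0 0 * v 0 0 + M 1 0 * v 1 0) ^+ 2 + (M 0 1 * v 0 0 + M 1 1 * v 1 0) ^+ 2).
  by move: hu2; rewrite hs_cv2 !mxE !sum2 !mxE.
have he : hs E ^+ 2 = (M 0 0 ^+2 + M 0 1 ^+2 - v 0 0 ^+2)^+2 + (M 0 0 * M 1 0 + M 0 1 * M 1 1 - v 0 0 * v 1 0)^+2
   + (M 1 0 * M 0 0 + M 1 1 * M 0 1 - v 1 0 * v 0 0)^+2 + (M 1 0 ^+2 + M 1 1 ^+2 - v 1 0 ^+2)^+2.
  rewrite hs_mx2 sqr_sqrtr ?addr_ge0 ?sqr_ge0 // /E /mxproj !mxE !sum2 !sum1 !mxE; congr (_ + _ + _ + _); congr (_ ^+ 2); ring.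
have -> : hs (M - vtensor u v) ^+ 2 = (M 0 0 - v 0 0 * u 0 0) ^+ 2 + (M 0 1 - v 0 0 * u 1 0) ^+ 2 +
  (M 1 0 - v 1 0 * u 0 0) ^+ 2 + (M 1 1 - v 1 0 * u 1 0) ^+ 2.
  by rewrite (hs_mx2 (M - _)) sqr_sqrtr ?addr_ge0 ?sqr_ge0 // /vtensor !mxE !sum1 !mxE.
have := @core_real _ _ _ _ _ _ _ _ _ S1 V1 hu1 hz (hs_ge0 E) he.
by congr (_ <= _); congr (_ + _ + _ + _); rewrite mulrC.
Qed.


Lemma trace_real (a b c d p q X Y e : R) :
  a^+2+b^+2+c^+2+d^+2 = 1 -> 0 <= e ->
  e^+2 = (a^+2+b^+2 - p^+2)^+2 + X^+2 + Y^+2 + (c^+2+d^+2-q^+2)^+2 ->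
  `|1 - (p^+2 + q^+2)| <= 2 * e.
Proof.
move=> hM he he2.
have -> : 1 - (p^+2 + q^+2) = (a^+2+b^+2 - p^+2) + (c^+2+d^+2-q^+2) by rewrite -hM; ring.
have h2e : 0 <= 2 * e by rewrite mulr_ge0.
rewrite -(ger0_norm h2e) -ler_sqr ?normr_ge0 // !real_normK ?num_real //.
have key : forall A B X Y : R, (A+B)^+2 <= 2^+2 * (A^+2+X^+2+Y^+2+B^+2).
  move=> A B X' Y'; have := sqr_ge0 (A - B); have := sqr_ge0 X'; have := sqr_ge0 Y'; nra.
rewrite exprMn he2; exact: key.
Qed.

Lemma hs_sq_mx2 (A : 'M[R]_2) : hs A ^+ 2 = A 0 0 ^+2 + A 0 1 ^+2 + A 1 0 ^+2 + A 1 1 ^+2.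
Proof. by rewrite hs_mx2 sqr_sqrtr // !addr_ge0 ?sqr_ge0. Qed.
Lemma hs_sq_cv2 (z : 'cV[R]_2) : hs z ^+ 2 = z 0 0 ^+2 + z 1 0 ^+2.
Proof. by rewrite hs_cv2 sqr_sqrtr // !addr_ge0 ?sqr_ge0. Qed.

Lemma trace_mx (M : 'M[R]_2) (v : 'cV[R]_2) : hs M = 1 ->
  `|1 - hs v ^+ 2| <= 2 * hs (M *m M^T - mxproj v).
Proof.
move=> hM.
have S1 : M 0 0 ^+2 + M 0 1 ^+2 + M 1 0 ^+2 + M 1 1 ^+2 = 1 by rewrite -hs_sq_mx2 hM expr1n.
rewrite hs_sq_cv2.
apply: (@trace_real _ _ _ _ _ _ ((M *m M^T - mxproj v) 0 1) ((M *m M^T - mxproj v) 1 0) _ S1 (hs_ge0 _)).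
rewrite hs_sq_mx2 /mxproj; congr (_ + _ + _ + _); rewrite !mxE !sum2 !sum1 !mxE; congr (_ ^+ 2); ring.
Qed.

Lemma hsZ k (A : 'M[R]_2) : hs (k *: A) = `|k| * hs A.
Proof.
rewrite !hs_mx2 !mxE -sqrtr_sqr -sqrtrM ?sqr_ge0 //; congr Num.sqrt; ring.
Qed.

Lemma MMT (D : 'M[R]_2) : (hs D ^+ 2)^-1 *: (D *m D^T) = ((hs D)^-1 *: D) *m ((hs D)^-1 *: D)^T.
Proof.
rewrite linearZ /= -scalemxAr -scalemxAl scalerA; congr (_ *: _).
by rewrite -exprVn expr2.
Qed.

Lemma I2cases (i : 'I_2) : i = 0 \/ i = 1.
Proof. case: i => [[|[|//]] Hi]; [left|right]; exact: val_inj. Qed.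

Lemma hs0 (A : 'M[R]_2) : hs A = 0 -> A = 0.
Proof.
move=> h; have : hs A ^+ 2 = 0 by rewrite h expr0n.
rewrite hs_sq_mx2 => H.
have := sqr_ge0 (A 0 0); have := sqr_ge0 (A 0 1); have := sqr_ge0 (A 1 0); have := sqr_ge0 (A 1 1) => h1 h2 h3 h4.
have e1 : A 0 0 ^+ 2 = 0 by lra.
have e2 : A 0 1 ^+ 2 = 0 by lra.
have e3 : A 1 0 ^+ 2 = 0 by lra.
have e4 : A 1 1 ^+ 2 = 0 by lra.
apply/matrixP => i j; rewrite mxE.
by case: (I2cases i) => ->; case: (I2cases j) => ->; apply/eqP; rewrite -sqrf_eq0; apply/eqP.
Qed.

Lemma sq_cvg (f e : nat -> R) : (forall l, 0 <= f l) -> (forall l, f l ^+2 <= 2 * e l) ->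
  e @ \oo --> 0 -> f @ \oo --> 0.
Proof.
move=> f0 fe /cvgr0Pnorm_lt he; apply/cvgr0Pnorm_lt => eps eps0.
have h2 : 0 < eps ^+ 2 / 2 by rewrite divr_gt0 // exprn_gt0.
apply: filterS (he _ h2) => l hl.
rewrite ger0_norm //; have := fe l; have := f0 l; have := ler_norm (e l).
move: hl; nra.
Qed.
Lemma const_le (c : R) (e : nat -> R) : (forall l, c <= e l) -> e @ \oo --> 0 -> c <= 0.
Proof.
move=> ce he; apply: (ler_cvg_to (cvg_cst c) he); exact: nearW.
Qed.

Lemma mset1 (p : R * R) : measurable [set p].
Proof.
case: p => a b; rewrite (_ : [set (a, b)] = [set a] `*` [set b]).
  exact: measurableX (measurable_set1 a) (measurable_set1 b).
by apply/seteqP; split => [[x y] /= [-> ->]|[x y] /= [-> ->]].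
Qed.
Lemma cvg0u (u : nat -> R) (l : R) : (forall n, u n = 0) -> u @ \oo --> l -> l = 0.
Proof.
move=> u0 h; have e : u = fun=> 0 by apply/funext.
rewrite e in h; exact: (cvg_unique _ h (cvg_cst 0)).
Qed.

Lemma cv_psi (i : 'I_3) (x y : R * R) : cv (psi i x) - cv (psi i y) = T i *m (cv x - cv y).
Proof. by rewrite /psi !cvK opprD addrACA subrr add0r -mulmxBr opprB addrA subrK. Qed.

Lemma cv_psi_seq (s : seq 'I_3) (x y : R * R) :
  cv (psi_seq s x) - cv (psi_seq s y) = foldr (fun i M => T i *m M) 1%:M s *m (cv x - cv y).
Proof.
elim: s => [|i s IH] /=; first by rewrite mul1mx.
by rewrite cv_psi IH mulmxA.
Qed.

Lemma D_ne0 (w : nat -> 'I_3) l : hs (Dpsiw w l) != 0 :> R.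
Proof.
apply/eqP => /hs0 D0.
have H : cv (psiw w l ((0, 0) : R * R)) - cv (psiw w l (1, 0)) = Dpsiw w l *m (cv (0, 0) - cv (1, 0)).
  exact: cv_psi_seq.
move: H; rewrite D0 mul0mx => /eqP; rewrite subr_eq0 => /eqP /(congr1 (@pt R)); rewrite !ptK.
move=> /psi_seq_inj /(congr1 fst) /= /eqP; by rewrite eq_sym oner_eq0.
Qed.

Lemma null_union (S : set (R * R)) (tau : set (R * R) -> 'M[R]_2) (N0 : set (R * R)) (c : nat -> R * R) :
  psd_mx_measure S tau -> (forall x, kappa tau [set x] = 0) -> measurable N0 -> kappa tau N0 = 0 ->
  exists N, [/\ measurable N, kappa tau N = 0, N0 `<=` N & forall n, N (c n)].
Proof.
move=> [t0 cadd _ _] k1 mN0 kN0.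
pose H n := if pselect (~ N0 (c n) /\ forall k, (k < n)%N -> c k <> c n) is left _ then [set c n] else set0.
pose F n := if n is n'.+1 then H n' else N0.
have mF : forall n, measurable (F n).
  case=> [|n] //=; rewrite /H; case: pselect => _; [exact: mset1 | exact: measurable0].
have kF : forall n, \tr (tau (F n)) = 0.
  case=> [|n] //=; rewrite /H; case: pselect => _; first exact: k1.
  by rewrite t0 mxtrace0.
have tF : trivIset setT F.
  move=> [|i] [|j] _ _ [z [Fi Fj]] //=; move: Fi Fj => /=; rewrite /H.
  - by case: pselect => [[nN _]|_] //= Nz zc; case: nN; rewrite -zc.
  - by case: pselect => [[nN _]|_] //= zc Nz; case: nN; rewrite -zc.
  case: pselect => [[_ hi]|_] //= ->; case: pselect => [[_ hj]|_] //= eij.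
  congr (_.+1); case: (ltngtP i j) => // ij; [by case: (hj _ ij) | by case: (hi _ ij)].
exists (\bigcup_n F n); split.
- exact: bigcupT_measurable.
- have h0 := cadd F mF tF 0 0; have h1 := cadd F mF tF 1 1.
  have := cvgD h0 h1; rewrite /kappa /mxtrace sum2; move=> hh; have hh2 := hh eventually_filter; apply: (cvg0u _ hh2) => n /=.
  change (\sum_(k < n) tau (F k) 0 0 + \sum_(k < n) tau (F k) 1 1 = 0).
  rewrite -big_split /=; apply: big1 => k _; by have := kF k; rewrite /mxtrace sum2.
- by move=> x Nx; exists 0%N.
- move=> n; case: (pselect (N0 (c n))) => hn; first by exists 0%N.
  have ex : exists k, (fun k => c k == c n) k by exists n.
  case: (ex_minnP ex) => k0 /eqP ck0 kmin.
  exists k0.+1 => //=; rewrite /H; case: pselect => [_|nP]; first by [].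
  exfalso; apply: nP; split; first by rewrite ck0.
  move=> k kk0; rewrite ck0 => /eqP /kmin; by rewrite leqNgt kk0.
Qed.
End Aux.

Definition choose_w {R : realType} (x : R * R) : nat -> 'I_3 :=
  if pselect (exists w, coding w x) is left h then proj1_sig (cid h) else fun _ => 0.

Definition Jpt (R : realType) (t : seq 'I_3 * ('I_3 * 'I_3)) : R * R :=
  psi_seq t.1 (psi t.2.1 (pt (fixpt t.2.2))).

Definition cenum (R : realType) (n : nat) : R * R :=
  if unpickle n is Some t then Jpt R t else (0, 0).

Theorem lemma2p3 (R : realType) (S : set (R * R)) (beta : R)
  (tau : set (R * R) -> 'M[R]_2) (v : R * R -> 'cV[R]_2) :
  is_attractor S ->
  L_eigenvalue_Id beta ->
  kusuoka_tau S beta tau ->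
  (* kappa is non-atomic (known, see context) *)
  (forall x, kappa tau [set x] = 0) ->
  (* the unit vector field v of the context *)
  (forall x, S x -> unit_vec (v x)) ->
  kappa_ae tau (fun x => forall w, coding w x ->
    (fun l : nat => hs (((hs (Dpsiw w l)) ^+ 2)^-1 *: (Dpsiw w l *m (Dpsiw w l)^T)
                        - mxproj (v x))) @ \oo --> (0 : R)) ->
  exists vl : nat -> R * R -> 'cV[R]_2,
    (forall l x, (1 <= l)%N -> S x -> unit_vec (vl l x)) /\
    kappa_ae tau (fun x => forall w, coding w x ->
      (fun l : nat => hs ((hs (Dpsiw w l))^-1 *: Dpsiw w l
                          - vtensor (vl l x) (v x))) @ \oo --> (0 : R)).
Proof.
move=> _ _ [psd _ _] k1 _ [N0 [mN0 kN0 HN0]].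
pose Mw (w : nat -> 'I_3) l : 'M[R]_2 := (hs (Dpsiw w l))^-1 *: Dpsiw w l.
exists (fun l x => nrm ((Mw (choose_w x) l)^T *m v x)); split.
  move=> l x _ _; rewrite /unit_vec hs_cv2; have [-> _] := nrm_prop ((Mw (choose_w x) l)^T *m v x).
  exact: sqrtr1.
have [N [mN kN N0N cN]] := null_union (cenum R) psd k1 mN0 kN0.
exists N; split => // x Nx w cw.
have good := HN0 x (fun h => Nx (N0N _ h)) w cw.
have nJ : ~ Jset x.
  move=> [s [c [j ex]]]; apply: Nx; rewrite ex.
  have := cN (pickle (s, (c, j))); by rewrite /cenum pickleK.
have cwE : choose_w x = w.
  rewrite /choose_w; case: pselect => [h|[]]; last by exists w.
  case: (cid h) => w' cw' /=.
  apply/funext => k; apply: contrapT => hk.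
  apply: nJ; apply: (two_codings cw' cw); exists k; exact/eqP.
rewrite cwE.
have hM : forall l, hs (Mw w l) = 1.
  move=> l; rewrite /Mw hsZ ger0_norm ?invr_ge0 ?hs_ge0 // mulVf //; exact: D_ne0.
move: good; under eq_fun do rewrite MMT.
move=> good.
have hv : hs (v x) = 1.
  have c0 : `|1 - hs (v x) ^+ 2| <= 0.
    apply: (@const_le _ _ (fun l => 2 * hs (Mw w l *m (Mw w l)^T - mxproj (v x)))).
      move=> l; exact: trace_mx.
    by rewrite -(mulr0 2); apply: cvgMr.
  have : hs (v x) ^+ 2 = 1.
    by move: c0; rewrite normr_le0 subr_eq0 => /eqP <-.
  by move/eqP; rewrite sqrf_eq1 => /orP [/eqP //|/eqP h]; have := hs_ge0 (v x); rewrite h; lra.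
apply: (@sq_cvg _ _ (fun l => hs (Mw w l *m (Mw w l)^T - mxproj (v x)))) => //.
  by move=> l; exact: hs_ge0.
by move=> l; exact: (key (hM l) hv).
Qed.
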